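(* Let $q\ge5$ be a prime power and let $\mathcal{C}_\mathscr{C}$ be the $[q+1,q-3,5]_q$ code with parity check matrix whose columns are the vectors $(1,t,t^2,t^3)$, $t\in\mathbb{F}_q$, and $(0,0,0,1)$. The full weight distribution $(B_w(\mathcal{V}))_{0\le w\le q+1}$ of any coset $\mathcal{V}$ of $\mathcal{C}_\mathscr{C}$ is uniquely determined by the weight of $\mathcal{V}$ together with the number $B_3(\mathcal{V})$ of its weight-$3$ vectors; in particular, two cosets of the same weight with the same value of $B_3$ have identical weight distributions.
   Context: A coset of a linear code $\mathcal{C}\subseteq\mathbb{F}_q^n$ is a set $\mathbf{v}+\mathcal{C}$, $\mathbf{v}\in\mathbb{F}_q^n$; its weight is the minimum Hamming weight of its vectors; $B_w(\mathcal{V})$ denotes the number of vectors of Hamming weight $w$ in the coset $\mathcal{V}$. The cosets of $\mathcal{C}_\mathscr{C}$ have weight at most $3$. *)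

(* Defs.v *)
From HB Require Import structures.
From mathcomp Require Import all_boot all_order all_algebra.
Set Implicit Arguments. Unset Strict Implicit. Unset Printing Implicit Defensive.
Import GRing.Theory.
Local Open Scope ring_scope.

Section Code.
Variable F : finFieldType.

(* Coordinates of F_q^(q+1) are indexed by option F:
   Some t  <-> column (1,t,t^2,t^3),   None <-> column (0,0,0,1). *)
Definition word := {ffun option F -> F}.

Definition pcol (i : option F) : 'rV[F]_4 :=
  match i with
  | Some t => \row_(j < 4) t ^+ j
  | None => \row_(j < 4) (if val j == 3%N then 1 else 0)
  end.

Definition syndrome (x : word) : 'rV[F]_4 := \sum_i x i *: pcol i.

Definition CC : {set word} := [set x : word | syndrome x == 0].

Definition hwt (x : word) : nat := #|[set i | x i != 0]|.

Definition coset (v : word) : {set word} := [set v + c | c in CC].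

Definition coset_weight (V : {set word}) : nat :=
  \big[minn/#|{: option F}|]_(x in V) hwt x.

Definition B (w : nat) (V : {set word}) : nat := #|[set x in V | hwt x == w]|.

End Code.

(* Main.v *)
Require Import Defs.
From mathcomp Require Import all_boot all_order all_algebra.
Set Implicit Arguments. Unset Strict Implicit. Unset Printing Implicit Defensive.
From mathcomp Require Import zify ring lra.
Import GRing.Theory.
Local Open Scope ring_scope.

Section S.
Variable F : finFieldType.
Implicit Types x y c v : word F.

Definition supp x : {set option F} := [set i | x i != 0].

Lemma syndromeD x y : syndrome (x + y) = syndrome x + syndrome y.
Proof. by rewrite /syndrome -big_split; apply: eq_bigr => i _; rewrite ffunE scalerDl. Qed.

Lemma syndromeB x y : syndrome (x - y) = syndrome x - syndrome y.
Proof. by rewrite /syndrome -sumrB; apply: eq_bigr => i _; rewrite !ffunE scalerBl. Qed.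

Lemma mem_coset x v : (x \in coset v) = (syndrome x == syndrome v).
Proof.
apply/imsetP/eqP => [[c cC ->]|H].
  by move: cC; rewrite inE syndromeD => /eqP ->; rewrite addr0.
exists (x - v); first by rewrite inE syndromeB H subrr.
by rewrite addrC subrK.
Qed.

Definition ev (p : {poly F}) (i : option F) := \sum_(j < 4) p`_j * pcol i 0 j.

Lemma ev_sum p c : \sum_i c i * ev p i = \sum_(j < 4) p`_j * syndrome c 0 j.
Proof.
rewrite /ev.
under eq_bigr do rewrite mulr_sumr.
rewrite exchange_big /=; apply: eq_bigr => j _.
rewrite /syndrome summxE mulr_sumr; apply: eq_bigr => i _.
by rewrite mxE mulrCA.
Qed.

Lemma ev_Some (p : {poly F}) t : (size p <= 4)%N -> ev p (Some t) = p.[t].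
Proof.
move=> sp; rewrite (horner_coef_wide t sp) /ev; apply: eq_bigr => j _.
by rewrite /pcol mxE.
Qed.

Lemma ev_None (p : {poly F}) : ev p None = p`_3.
Proof.
by rewrite /ev !big_ord_recr big_ord0 /= !mxE /= !mulr0 !add0r mulr1.
Qed.


Lemma annih (S : {set option F}) i0 : i0 \in S -> (#|S| <= 4)%N ->
  exists p : {poly F}, [/\ (size p <= 4)%N, ev p i0 != 0 &
     forall i, i \in S -> i != i0 -> ev p i = 0].
Proof.
move=> i0S cS.
set Sm := [set t : F | (Some t \in S) && (Some t != i0)].
set q := \prod_(t in Sm) ('X - t%:P).
have sq : size q = #|Sm|.+1 by rewrite /q -big_enum size_prod_XsubC cardE.
have qt : forall t, t \in Sm -> q.[t] = 0.
  by move=> t tS; rewrite /q horner_prod (bigD1 t) //= hornerXsubC subrr mul0r.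
have sub1 : Some @: Sm \subset S :\ i0.
  apply/subsetP => _ /imsetP [t tS ->]; move: tS; rewrite !inE => /andP [-> ->].
  by rewrite andbT.
have cSm : (#|Sm| + 1 <= #|S|)%N.
  move: (subset_leq_card sub1); rewrite card_imset; last exact: Some_inj.
  by rewrite (cardsD1 i0 S) i0S addnC.
case: i0 i0S @Sm @q sq qt sub1 cSm => [t0|] i0S Sm q sq qt sub1 cSm.
- exists q; split.
  + by rewrite sq; apply: leq_trans cS; rewrite addn1 in cSm.
  + rewrite ev_Some; last by rewrite sq; apply: leq_trans cS; rewrite addn1 in cSm.
    rewrite /q horner_prod; apply/prodf_neq0 => t; rewrite !inE => /andP [_ tt0].
    by rewrite hornerXsubC subr_eq0 eq_sym; apply: contra tt0 => /eqP ->.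
  + case=> [t|] iS ii0.
    * rewrite ev_Some; last by rewrite sq; apply: leq_trans cS; rewrite addn1 in cSm.
      by apply: qt; rewrite !inE iS ii0.
    * rewrite ev_None nth_default // sq.
      have sub2 : Some @: Sm \subset (S :\ Some t0) :\ None.
        apply/subsetP => _ /imsetP [t tS ->]; move: tS; rewrite !inE => /andP [-> ->].
        by rewrite andbT.
      move: (subset_leq_card sub2); rewrite card_imset; last exact: Some_inj.
      move=> h; have := cardsD1 (Some t0) S; have := cardsD1 None (S :\ Some t0); rewrite i0S !inE iS /=.
      move=> e1 e2; move: cS; rewrite e2 e1 !add1n ltnS => cS; exact: leq_ltn_trans h cS.
- have c3 : (#|Sm| <= 3)%N by rewrite -ltnS -addn1 (leq_trans cSm).
  have qn0 : q != 0 by rewrite -size_poly_eq0 sq.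
  have xn0 : 'X^(3 - #|Sm|) != 0 :> {poly F} by rewrite -size_poly_eq0 size_polyXn.
  have sp : size ('X^(3 - #|Sm|) * q) = 4.
    by rewrite size_mul // size_polyXn sq /= addnS subnK.
  exists ('X^(3 - #|Sm|) * q); split.
  + by rewrite sp.
  + rewrite ev_None.
    have -> : ('X^(3 - #|Sm|) * q)`_3 = lead_coef ('X^(3 - #|Sm|) * q) by rewrite lead_coefE sp.
    by rewrite lead_coefM lead_coefXn /q lead_coef_prod_XsubC mul1r oner_eq0.
  + case=> [t|] iS ii0 //.
    rewrite ev_Some ?sp // hornerM qt ?mulr0 //.
    by rewrite !inE iS.
Qed.

Lemma mindist c : syndrome c = 0 -> (#|supp c| <= 4)%N -> c = 0.
Proof.
move=> Hs Hc; apply/ffunP => i0; rewrite ffunE; apply/eqP; apply: contraT => ci0.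
have i0S : i0 \in supp c by rewrite inE.
have [p [sp e0 ei]] := annih i0S Hc.
have : \sum_i c i * ev p i = 0.
  by rewrite ev_sum Hs big1 // => j _; rewrite mxE mulr0.
rewrite (bigD1 i0) //= big1 ?addr0 => [/eqP|i ii0].
  by rewrite mulf_eq0 (negbTE ci0) (negbTE e0).
have [->|ci] := eqVneq (c i) 0; first by rewrite mul0r.
by rewrite ei ?mulr0 // inE.
Qed.


Lemma supp_addP x y i : x i + y i != 0 -> (x i != 0) || (y i != 0).
Proof. by apply: contraR; rewrite negb_or !negbK => /andP [/eqP -> /eqP ->]; rewrite addr0. Qed.

Lemma supp_add x y : supp (x + y) \subset supp x :|: supp y.
Proof. by apply/subsetP => i; rewrite !inE ffunE => /supp_addP. Qed.

Lemma supp_opp y : supp (- y) = supp y.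
Proof. by apply/setP => i; rewrite !inE ffunE oppr_eq0. Qed.

Lemma uniq_small v x y : x \in coset v -> y \in coset v ->
  (hwt x <= 2)%N -> (hwt y <= 2)%N -> x = y.
Proof.
rewrite !mem_coset => /eqP sx /eqP sy hx hy.
apply/eqP; rewrite -subr_eq0; apply/eqP; apply: mindist.
  by rewrite syndromeB sx sy subrr.
apply: leq_trans (subset_leq_card (supp_add x (- y))) _.
rewrite supp_opp; apply: leq_trans (leq_card_setU _ _) _.
by apply: (leq_trans (leq_add hx hy)).
Qed.

Lemma surj (T : {set option F}) s : (4 <= #|T|)%N ->
  exists d, supp d \subset T /\ syndrome d = s.
Proof.
move=> cT.
have [T0] : exists T0 : {set option F}, T0 \in [set A : {set option F} | (A \subset T) && (#|A| == 4)%N].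
  by apply/card_gt0P; rewrite cards_draws bin_gt0.
rewrite inE => /andP [sT0 /eqP c4].
set W := [set x : word F | supp x \subset T0].
have cW : #|W| = (#|F| ^ 4)%N.
  rewrite -c4 -(card_pffun_on 0 T0 (@predT F)); apply: eq_card => x; rewrite inE.
  apply/idP/pffun_onP => [h|[h _]].
    split; last by move=> y _.
    by apply/subsetP => i; rewrite inE => xi; apply: (subsetP h); rewrite inE.
  by apply/subsetP => i; rewrite inE => xi; apply: (subsetP h); rewrite inE.
have inj : {in W &, injective (@syndrome F)}.
  move=> x y; rewrite !inE => xW yW e.
  apply/eqP; rewrite -subr_eq0; apply/eqP; apply: mindist.
    by rewrite syndromeB e subrr.
  rewrite -c4; apply: subset_leq_card; apply: subset_trans (supp_add x (- y)) _.
  by rewrite supp_opp subUset xW yW.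
have : (@syndrome F) @: W = setT.
  apply/eqP; rewrite eqEcard subsetT cardsT card_in_imset // cW card_mx.
  by rewrite mul1n leqnn.
move/setP/(_ s); rewrite inE => /imsetP [x xW ->].
exists x; split => //; apply: subset_trans sT0; by rewrite inE in xW.
Qed.

Lemma cnt_le (T : {set option F}) v1 v2 : (4 <= #|T|)%N ->
  (#|[set x in coset v1 | supp x \subset T]| <= #|[set x in coset v2 | supp x \subset T]|)%N.
Proof.
move=> cT; have [d [sd sy]] := surj (syndrome v2 - syndrome v1) cT.
rewrite -(card_imset _ (addIr d)); apply: subset_leq_card.
apply/subsetP => _ /imsetP [x xin ->]; move: xin; rewrite !inE => /andP [xc xs].
rewrite mem_coset syndromeD sy; move: xc; rewrite mem_coset => /eqP ->.
rewrite addrC subrK eqxx /=; apply: subset_trans (supp_add x d) _.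
by rewrite subUset xs sd.
Qed.


Lemma bigmin_le (I : eqType) (r : seq I) (P : pred I) (f : I -> nat) (m : nat) (z : I) :
  z \in r -> P z -> (\big[minn/m]_(i <- r | P i) f i <= f z)%N.
Proof.
elim: r => // y r IH; rewrite inE big_cons => /orP [/eqP <- Px|xr Px].
  by rewrite Px geq_minl.
case: (P y); last exact: IH.
by rewrite (leq_trans (geq_minr _ _)) // IH.
Qed.

Lemma cw_le v x : x \in coset v -> (coset_weight (coset v) <= hwt x)%N.
Proof. by move=> xV; apply: bigmin_le => //; rewrite mem_index_enum. Qed.

Lemma hwt_max x : (hwt x <= #|{: option F}|)%N.
Proof. exact: max_card. Qed.

Lemma cw_att v : exists2 x, x \in coset v & hwt x = coset_weight (coset v).
Proof.
have vV : v \in coset v by rewrite mem_coset.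
have : (coset_weight (coset v) == #|{: option F}|) ||
       [exists x in coset v, coset_weight (coset v) == hwt x].
  rewrite /coset_weight; apply: (big_ind (fun m => (m == #|{: option F}|) ||
       [exists x in coset v, m == hwt x])).
  - by rewrite eqxx.
  - move=> a b ha hb; rewrite /minn; case: ifP => _ //.
  - by move=> x xV; apply/orP; right; apply/existsP; exists x; rewrite xV eqxx.
case/orP => [/eqP e|/existsP [x /andP [xV /eqP e]]]; last by exists x.
exists v => //; apply/eqP; rewrite eqn_leq cw_le // andbT e; exact: hwt_max.
Qed.

Lemma Bsmall v j : (j <= 2)%N -> B j (coset v) = (coset_weight (coset v) == j).
Proof.
move=> j2; have [x xV xw] := cw_att v.
have [e|ne] := eqVneq (coset_weight (coset v)) j.
  rewrite /B /= -(cards1 x); apply: eq_card => y; rewrite !inE.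
  apply/andP/eqP => [[yV /eqP yw]|->]; last by rewrite xV xw e eqxx.
  by apply: (uniq_small yV xV); rewrite ?yw ?xw ?e.
rewrite /B; apply/eqP; rewrite cards_eq0; apply/eqP/setP => y; rewrite !inE.
apply/negbTE; apply/andP => [[yV /eqP yw]].
have hx : (hwt x <= 2)%N by rewrite xw (leq_trans (cw_le yV)) // yw.
have yx := uniq_small yV xV (leq_trans (eq_leq yw) j2) hx.
by move: ne; rewrite -xw -yx yw eqxx.
Qed.

Lemma cntE (V : {set word F}) (P : pred (word F)) :
  #|[set x in V | P x]| = (\sum_(x in V) (P x : nat))%N.
Proof.
rewrite -sum1_card (eq_bigl (fun x => (x \in V) && P x)) => [|x]; last by rewrite !inE.
rewrite big_mkcondr /=; apply: eq_bigr => x _; by case: (P x).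
Qed.

Lemma card_super (I : finType) (S : {set I}) t :
  #|[set T : {set I} | (#|T| == t) && (S \subset T)]| =
  ('C(#|I| - #|S|, t - #|S|) * (#|S| <= t))%N.
Proof.
case: leqP => h; last first.
  rewrite muln0; apply/eqP; rewrite cards_eq0; apply/eqP/setP => T; rewrite !inE.
  apply/negbTE/andP => [[/eqP cT sT]]; move: (subset_leq_card sT); rewrite cT.
  by rewrite leqNgt h.
rewrite muln1.
have cC : #|~: S| = (#|I| - #|S|)%N by rewrite -(cardsC S) addKn.
rewrite -cC -cards_draws.
set D := [set A : {set I} | (A \subset ~: S) && (#|A| == t - #|S|)%N].
have -> : [set T : {set I} | (#|T| == t) && (S \subset T)] = (fun U => U :|: S) @: D.
  apply/setP => T; rewrite inE; apply/idP/imsetP.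
    move=> /andP [/eqP cT sT]; exists (T :\: S).
      rewrite inE; apply/andP; split.
        by apply/subsetP => i; rewrite !inE => /andP [].
      by rewrite cardsD (setIidPr sT) cT.
    apply/setP => i; rewrite !inE; case iS: (i \in S); rewrite ?orbT ?orbF //.
    exact: (subsetP sT).
  move=> [U]; rewrite inE => /andP [sU /eqP cU] ->.
  rewrite subsetUr andbT cardsU cU.
  have -> : U :&: S = set0.
    apply/setP => i; rewrite !inE; apply/negbTE/andP => [[iU iS]].
    by move: (subsetP sU i iU); rewrite inE iS.
  by rewrite cards0 subn0 subnK.
apply: card_in_imset => U1 U2; rewrite !inE => /andP [s1 _] /andP [s2 _] e.
apply/setP => i; have := congr1 (fun X : {set I} => i \in X) e; rewrite /= !inE.
case iS: (i \in S); last by rewrite !orbF.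
move=> _; move: (subsetP s1 i) (subsetP s2 i); rewrite !inE iS /=.
by case: (i \in U1); case: (i \in U2) => // h1 h2; first [by move: (h1 isT) | by move: (h2 isT)].
Qed.

Definition N (V : {set word F}) t :=
  (\sum_(T in [set T : {set option F} | #|T| == t]) #|[set x in V | supp x \subset T]|)%N.

Definition G t j := ('C(#|{: option F}| - j, t - j) * (j <= t))%N.

Lemma N_eq V t : N V t = (\sum_(x in V) G t (hwt x))%N.
Proof.
rewrite /N; under eq_bigr do rewrite cntE.
rewrite exchange_big /=; apply: eq_bigr => x xV.
rewrite /G -card_super -sum1_card.
rewrite [in RHS](eq_bigl (fun T : {set option F} => (T \in [set T0 : {set option F} | #|T0| == t]) && (supp x \subset T))) => [|T]; last by rewrite !inE.
by rewrite [in RHS]big_mkcondr /=; apply: eq_bigr => T _; case: (supp x \subset T).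
Qed.

Lemma sum_hwt (V : {set word F}) t : (\sum_(x in V) G t (hwt x))%N =
  (\sum_(j < #|{: option F}|.+1) B j V * G t j)%N.
Proof.
have -> : (\sum_(x in V) G t (hwt x))%N =
   (\sum_(x in V) \sum_(j < #|{: option F}|.+1) (hwt x == j) * G t j)%N.
  apply: eq_bigr => x _.
  have hx : (hwt x < #|{: option F}|.+1)%N by rewrite ltnS hwt_max.
  rewrite (bigD1 (Ordinal hx)) //= eqxx mul1n big1 ?addn0 // => j ne.
  have -> : (hwt x == j) = false.
    apply/negbTE; apply: contra ne => /eqP e; apply/eqP/val_inj; by rewrite /= e.
  by rewrite mul0n.
rewrite exchange_big /=; apply: eq_bigr => j _.
by rewrite -big_distrl /= /B cntE.
Qed.


Lemma split_sum (V : {set word F}) w : (w <= #|{: option F}|)%N ->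
  (\sum_(j < #|{: option F}|.+1) B j V * G w j)%N =
  (\sum_(j < #|{: option F}|.+1 | (j < w)%N) B j V * G w j + B w V)%N.
Proof.
move=> wn; rewrite (bigID (fun j : 'I_ _ => (j < w)%N)) /=; congr (_ + _).
have wn' : (w < #|{: option F}|.+1)%N by rewrite ltnS.
rewrite (bigD1 (Ordinal wn')) /=; last by rewrite ltnn.
rewrite big1 ?addn0.
  by rewrite /G subnn bin0 leqnn muln1.
move=> j /andP [jw jne]; rewrite /G.
have wj : (w < j)%N.
  rewrite ltn_neqAle leqNgt jw andbT; apply: contra jne => /eqP e.
  by apply/eqP/val_inj; rewrite /= e.
by rewrite leqNgt wj muln0 muln0.
Qed.

End S.

Theorem theorem3p5 (F : finFieldType) (hq : (5 <= #|F|)%N) (v1 v2 : word F) :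
  coset_weight (coset v1) = coset_weight (coset v2) ->
  B 3 (coset v1) = B 3 (coset v2) ->
  forall w : nat, B w (coset v1) = B w (coset v2).
Proof.
move=> ecw e3 w; elim/ltn_ind: w => w IH.
case: (leqP w 2) => w2; first by rewrite !Bsmall // ecw.
case: (leqP w 3) => w3.
  by have -> : w = 3 by apply/eqP; rewrite eqn_leq w3 w2.
case: (leqP w #|{: option F}|) => wn; last first.
  have B0 : forall V : {set word F}, B w V = 0.
    move=> V; rewrite /B; apply/eqP; rewrite cards_eq0; apply/eqP/setP => x.
    rewrite !inE; apply/negbTE/andP => [[_ /eqP hw]].
    by move: (hwt_max x); rewrite hw leqNgt wn.
  by rewrite !B0.
have NE : N (coset v1) w = N (coset v2) w.
  rewrite /N; apply: eq_bigr => T; rewrite inE => /eqP cT.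
  by apply/eqP; rewrite eqn_leq !cnt_le // cT.
move: NE; rewrite !N_eq !sum_hwt !(split_sum _ wn).
have -> : (\sum_(j < #|{: option F}|.+1 | (j < w)%N) B j (coset v1) * G F w j)%N =
          (\sum_(j < #|{: option F}|.+1 | (j < w)%N) B j (coset v2) * G F w j)%N.
  by apply: eq_bigr => j jw; rewrite IH.
exact: addnI.
Qed.
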